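(* Let $S$ be a powerful multiset over a finite set $E$ such that $r_S(X)\le |X|$ for all $X\subseteq E$. Then $S$ is (isomorphic to) a linear powerful set.
   Context: A multiset over $E$ has indicator function $f:2^E\to\mathbb{Z}_{\ge0}$ giving multiplicities, with $f(\emptyset)\neq0$ assumed; its rank function is $r_S(X)=\log_2\Big(\sum_{Y\subseteq E} f(Y)\big/\sum_{Y\subseteq E\setminus X} f(Y)\Big)$, and $S$ is a powerful multiset if $r_S(X)\in\mathbb{Z}$ for all $X\subseteq E$. Two powerful multisets with indicator functions $f_1,f_2$ on ground sets $E_1,E_2$ are isomorphic if there is a bijection $\phi:E_1\to E_2$ and $\alpha\in\mathbb{R}\setminus\{0\}$ with $f_1(X)=\alpha f_2(\phi(X))$ for all $X$. A powerful set is a set $S\subseteq 2^E$ such that for every $X\subseteq E$ the number of members of $S$ contained in $X$ is a power of 2; it is linear if it is a binary linear space, i.e. $\emptyset\in S$ and $S$ is closed under symmetric difference. *)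

(* Defs.v *)
From Stdlib Require Import Reals.
From mathcomp Require Import all_boot.
Set Implicit Arguments. Unset Strict Implicit. Unset Printing Implicit Defensive.

Definition multiset (E : finType) := {set E} -> nat.

Definition msum (E : finType) (f : multiset E) : nat :=
  \sum_(Y : {set E}) f Y.

Definition msum_avoid (E : finType) (f : multiset E) (X : {set E}) : nat :=
  \sum_(Y : {set E} | Y \subset ~: X) f Y.

Definition log2 (x : R) : R := Rdiv (ln x) (ln (INR 2)).

Definition rank (E : finType) (f : multiset E) (X : {set E}) : R :=
  log2 (Rdiv (INR (msum f)) (INR (msum_avoid f X))).

Definition powerful_multiset (E : finType) (f : multiset E) : Prop :=
  forall X : {set E}, exists z : Z, rank f X = IZR z.

Definition powerful_set (E : finType) (S : {set {set E}}) : Prop :=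
  forall X : {set E}, exists k : nat, #|[set Y in S | Y \subset X]| = 2 ^ k.

Definition symdiff (E : finType) (A B : {set E}) : {set E} :=
  (A :\: B) :|: (B :\: A).

Definition linear_set (E : finType) (S : {set {set E}}) : Prop :=
  set0 \in S /\ forall A B, A \in S -> B \in S -> symdiff A B \in S.

Definition set_indicator (E : finType) (S : {set {set E}}) : multiset E :=
  fun X => if X \in S then 1 else 0.

Definition ms_isomorphic (E1 E2 : finType) (f1 : multiset E1)
    (f2 : multiset E2) : Prop :=
  exists (phi : E1 -> E2) (alpha : R), bijective phi /\ alpha <> R0 /\
    forall X : {set E1}, INR (f1 X) = Rmult alpha (INR (f2 (phi @: X))).

(* Main.v *)
Require Import Defs.
From Stdlib Require Import Reals Lra Lia ZArith.
From mathcomp Require Import all_boot all_algebra zify.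

Lemma msum_avoid_pos (E : finType) (f : {set E} -> nat) X :
  f set0 <> 0%N -> (0 < msum_avoid f X)%N.
Proof.
move=> f0; rewrite /msum_avoid (bigD1 set0) ?sub0set //=.
by case: (f set0) f0.
Qed.

Lemma msum_avoid_le (E : finType) (f : {set E} -> nat) X :
  (msum_avoid f X <= msum f)%N.
Proof.
rewrite /msum /msum_avoid [X in (_ <= X)%N](bigID (fun Y : {set E} => Y \subset ~: X)) /=. exact: leq_addr.
Qed.

Open Scope R_scope.

Lemma INR_expn2 k : INR (2 ^ k)%N = 2 ^ k.
Proof.
elim: k => [|k IH] //=. rewrite expnS -multE mult_INR IH /=. lra.
Qed.

Lemma step0 (E : finType) (f : {set E} -> nat) X z :
  f set0 <> 0%N -> rank f X = IZR z ->
  exists k, msum f = (2 ^ k * msum_avoid f X)%N /\ IZR z = INR k.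
Proof.
move=> f0; rewrite /rank /log2.
have gpos := @msum_avoid_pos E f X f0.
have gle := @msum_avoid_le E f X.
set g := msum_avoid f X in gpos gle *; set N := msum f in gle *.
have gR : 0 < INR g by apply: lt_0_INR; apply/ltP.
have gNR : INR g <= INR N by apply: le_INR; apply/leP.
have a1 : 1 <= INR N / INR g.
  apply (Rmult_le_reg_r (INR g)) => //. field_simplify; lra.
have l2 := ln_lt_2.
have la : 0 <= ln (INR N / INR g).
  case: (Rle_lt_or_eq_dec _ _ a1) => h.
  - rewrite -ln_1; left; apply: ln_increasing => //; lra.
  - rewrite -h ln_1; lra.
move=> hz. have e2 : INR 2 = 2 by rewrite /= ; lra. rewrite e2 in hz.
have hz' : ln (INR N / INR g) = IZR z * ln 2.
  rewrite -hz. field. lra.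
have z0 : Z.le 0 z.
  apply: le_0_IZR. apply (Rmult_le_reg_r (ln 2)); lra.
exists (Z.to_nat z). 
have zk : IZR z = INR (Z.to_nat z) by rewrite INR_IZR_INZ Z2Nat.id.
split => //.
apply: INR_eq. rewrite -multE mult_INR INR_expn2.
have : INR N / INR g = 2 ^ Z.to_nat z.
  apply: ln_inv; first by lra.
  - apply: pow_lt; lra.
  rewrite ln_pow ?hz' ?zk //; lra.
move=> h. rewrite -h. field. lra.
Qed.

Close Scope R_scope.

Import GRing.Theory Num.Theory.
Set Implicit Arguments. Unset Strict Implicit.
Open Scope ring_scope.

Section Chi.
Variable E : finType.

Definition sg (b : bool) : int := if b then -1 else 1.
Definition chi (s Y : {set E}) : int := \prod_(x in s) sg (x \in Y).

Lemma chi_set0 Y : chi set0 Y = 1.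
Proof. by rewrite /chi big_set0. Qed.

Lemma chi_pm s Y : chi s Y = 1 \/ chi s Y = -1.
Proof.
rewrite /chi; apply: (big_ind (fun v : int => v = 1 \/ v = -1)); first by left.
- by move=> a b [->|->] [->|->]; rewrite ?mulr1 ?mul1r ?mulrNN ?mulr1; auto.
- by move=> x _; rewrite /sg; case: (x \in Y); auto.
Qed.

Lemma chi_sym s A B : chi s A * chi s B = chi s (symdiff A B).
Proof.
rewrite /chi -big_split /=; apply: eq_bigr => x _.
rewrite /symdiff !inE /sg.
by case: (x \in A); case: (x \in B).
Qed.

Lemma chi_split (s t Y : {set E}) : t \subset s -> chi s Y = chi t Y * chi (s :\: t) Y.
Proof.
move=> ts; rewrite /chi (big_setID t) /=.
by rewrite (setIidPr ts).
Qed.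
End Chi.

Import GRing.Theory Num.Theory.
Set Implicit Arguments. Unset Strict Implicit.
Open Scope ring_scope.

Section Sum.
Variable E : finType.
Definition toggle (x : E) (s : {set E}) := if x \in s then s :\ x else x |: s.

Lemma toggleK x : involutive (toggle x).
Proof.
move=> s; rewrite /toggle; case: (boolP (x \in s)) => xs.
- rewrite !inE eqxx /=. apply/setP => y; rewrite !inE; case: eqP => // ->; by rewrite xs.
- rewrite !inE eqxx /=. apply/setP => y; rewrite !inE; case: eqP => // ->; by rewrite (negbTE xs).
Qed.

Lemma chi_toggle x (s Y : {set E}) : x \in Y -> chi (toggle x s) Y = - chi s Y.
Proof.
move=> xY; rewrite /toggle; case: ifP => xs.
- rewrite (@chi_split E s [set x] Y) ?sub1set //.
  by rewrite {2}/chi big_set1 /sg xY mulN1r opprK.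
- by rewrite /chi big_setU1 ?xs //= /sg xY mulN1r.
Qed.

Lemma sum_chi (X Y : {set E}) :
  \sum_(s : {set E} | s \subset X) chi s Y =
    if Y \subset ~: X then (2 ^ #|X|)%:Z else 0.
Proof.
case: ifP => YX.
- rewrite (eq_bigr (fun _ => 1)); last first.
    move=> s sX; rewrite /chi big1 // => x xs; rewrite /sg.
    have : x \notin Y.
      apply/negP => xY; move/subsetP: YX => /(_ x xY); rewrite inE.
      by move/subsetP: sX => /(_ x xs) ->.
    by move/negbTE => ->.
  rewrite (eq_bigl (fun s => s \in powerset X)); last by move=> s; rewrite powersetE.
  by rewrite sumr_const card_powerset natz.
- have [x] : exists x, (x \in X) && (x \in Y).
    move/negbT: YX => /subsetPn [x xY]; rewrite inE negbK => xX.
    by exists x; rewrite xX xY.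
  case/andP => xX xY.
  set S := \sum_(s | _) _.
  have : S = - S.
    rewrite /S -sumrN [LHS](reindex_inj (can_inj (toggleK x))) /=.
    apply: eq_big => s.
    + rewrite /toggle; case: ifP => xs; apply/idP/idP.
      * move=> h; apply/subsetP => y ys; have := subsetP h y.
        rewrite !inE; case: eqP => [->|_] //=; by apply.
      * move=> h; apply/subsetP => y; rewrite !inE => /andP [_]; exact: (subsetP h).
      * move=> h; apply/subsetP => y ys; apply: (subsetP h); rewrite !inE ys orbT //.
      * move=> h; apply/subsetP => y; rewrite !inE => /orP [/eqP ->|] //; exact: (subsetP h).
    + by move=> _; rewrite chi_toggle.
  move=> h; lia.
Qed.
End Sum.

Import GRing.Theory Num.Theory.
Set Implicit Arguments. Unset Strict Implicit.
Open Scope ring_scope.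

Section Four.
Variable E : finType.
Variable f : {set E} -> nat.

Definition F (s : {set E}) : int := \sum_(Y : {set E}) (f Y)%:Z * chi s Y.

Lemma Nsum : (msum f)%:Z = \sum_(Y : {set E}) (f Y)%:Z.
Proof. by rewrite /msum -natz natr_sum; apply: eq_bigr => Y _; rewrite natz. Qed.

Lemma F_sum (X : {set E}) : \sum_(s : {set E} | s \subset X) F s = (2 ^ #|X| * msum_avoid f X)%N%:Z.
Proof.
rewrite /F exchange_big /=.
under eq_bigr do rewrite -mulr_sumr sum_chi.
rewrite (eq_bigr (fun Y : {set E} => if Y \subset ~: X then (f Y)%:Z * (2 ^ #|X|)%N%:Z else 0)); last first.
  by move=> Y _; case: ifP; rewrite ?mulr0.
rewrite -big_mkcond /= -mulr_suml PoszM mulrC /msum_avoid. congr (_ * _); rewrite -natz natr_sum; by apply: eq_bigr => Y _; rewrite natz.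
Qed.

Lemma chi_sq (s Y : {set E}) : chi s Y * chi s Y = 1.
Proof. by case: (chi_pm s Y) => ->. Qed.

Lemma F_bound (s : {set E}) : - (msum f)%:Z <= F s <= (msum f)%:Z.
Proof.
rewrite Nsum /F -sumrN; apply/andP; split; apply: ler_sum => Y _;
  case: (chi_pm s Y) => ->; lia.
Qed.

Lemma F_sign (s : {set E}) (e : int) : (e = 1 \/ e = -1) -> F s = e * (msum f)%:Z ->
  forall Y, f Y = 0%N \/ chi s Y = e.
Proof.
move=> he hF.
have h0 : \sum_(Y : {set E}) (f Y)%:Z * (1 - e * chi s Y) = e * (e * (msum f)%:Z - F s).
  rewrite Nsum /F mulr_sumr -sumrB mulr_sumr; apply: eq_bigr => Y _.
  case: he => ->; case: (chi_pm s Y) => ->; lia.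
rewrite hF subrr mulr0 in h0.
have hpos : forall Y : {set E}, true -> 0 <= (f Y)%:Z * (1 - e * chi s Y).
  move=> Y' _; case: he => ->; case: (chi_pm s Y') => ->; lia.
move=> Y; have := psumr_eq0P hpos h0 => /(_ Y).
case: he => ->; case: (chi_pm s Y) => ->; lia.
Qed.
End Four.

Import GRing.Theory Num.Theory.
Set Implicit Arguments. Unset Strict Implicit.
Open Scope ring_scope.

Section Main.
Variable E : finType.
Variable f : {set E} -> nat.
Hypothesis f0 : f set0 <> 0%N.
Hypothesis Hk : forall X : {set E}, exists k, (k <= #|X|)%N /\ msum f = (2 ^ k * msum_avoid f X)%N.

Lemma Npos : (0 < msum f)%N.
Proof. exact: leq_trans (@msum_avoid_pos E f set0 f0) (@msum_avoid_le E f set0). Qed.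

Lemma F0 : F f set0 = (msum f)%:Z.
Proof. by rewrite Nsum /F; apply: eq_bigr => Y _; rewrite chi_set0 mulr1. Qed.

Lemma F_compl (s t : {set E}) : t \subset s -> F f s = - (msum f)%:Z ->
  F f (s :\: t) = - F f t.
Proof.
move=> ts hs; have hY := @F_sign E f s (-1) (or_intror erefl).
rewrite mulN1r in hY; have {}hY := hY hs.
rewrite /F -sumrN; apply: eq_bigr => Y _.
case: (hY Y) => [->|h]; first by lia.
have := chi_split Y ts; rewrite h.
case: (chi_pm t Y) => ->; case: (chi_pm (s :\: t) Y) => ->; lia.
Qed.

Lemma F_step (s : {set E}) :
  (forall t : {set E}, (#|t| < #|s|)%N -> F f t = 0 \/ F f t = (msum f)%:Z) ->
  F f s = 0 \/ F f s = (msum f)%:Z.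
Proof.
move=> IH.
have NP := Npos.
case: (eqVneq s set0) => [->|s0]; first by right; exact: F0.
have [k [kle hk]] := Hk s.
have hsum := F_sum f s.
have e1 : (2 ^ #|s| * msum_avoid f s)%N = (2 ^ (#|s| - k) * msum f)%N.
  by rewrite hk mulnA -expnD subnK.
rewrite e1 (bigD1 s) //= in hsum.
set B : int := \sum_(t : {set E} | (t \subset s) && (t != s)) (F f t == (msum f)%:Z)%:R.
have hB : \sum_(t : {set E} | (t \subset s) && (t != s)) F f t = (msum f)%:Z * B.
  rewrite /B mulr_sumr; apply: eq_bigr => t /andP [ts tns].
  have : (#|t| < #|s|)%N by apply: proper_card; rewrite properEneq tns ts.
  move/IH => [->|->]; rewrite ?eqxx ?mulr1 //.
  case: eqP => [h|_]; last by rewrite mulr0.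
  by move: NP h; lia.
rewrite hB in hsum.
have hb := F_bound f s.
set P : int := (2 ^ (#|s| - k))%N%:Z.
have P1 : 1 <= P by rewrite /P; have := expn_gt0 2 (#|s| - k); lia.
have hFs : F f s = (msum f)%:Z * (P - B).
  rewrite mulrBr; move: hsum; rewrite PoszM /P; nia.
have B0 : 0 <= B by apply: sumr_ge0 => t _; case: eqP.
have : P - B = -1 \/ P - B = 0 \/ P - B = 1.
  move: hb; rewrite hFs; move/andP => [h1 h2]; nia.
case=> [hd|[hd|hd]]; last first.
- by right; rewrite hFs hd mulr1.
- by left; rewrite hFs hd mulr0.
exfalso.
have hm : F f s = - (msum f)%:Z by rewrite hFs hd mulrN1.
have : B = 1.
  rewrite /B (bigD1 set0) /=; last by rewrite sub0set eq_sym s0.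
  rewrite F0 eqxx big1 ?addr0 // => t /andP [/andP [ts tns] tn0].
  case: eqP => // hN.
  have := F_compl ts hm; rewrite hN.
  have : (#|s :\: t| < #|s|)%N.
    rewrite cardsD (setIidPr ts).
    have : (0 < #|t|)%N by rewrite card_gt0.
    have : (#|t| <= #|s|)%N by exact: subset_leq_card.
    lia.
  move/IH => [->|->]; move: NP; lia.
lia.
Qed.

Lemma F01 (s : {set E}) : F f s = 0 \/ F f s = (msum f)%:Z.
Proof.
suff H : forall n (s : {set E}), (#|s| <= n)%N -> F f s = 0 \/ F f s = (msum f)%:Z.
  exact: (H #|s|).
elim=> [|n IHn] s' hs; apply: F_step => t ht.
- by move: hs ht; lia.
- apply: IHn; move: hs ht; lia.
Qed.
End Main.

Import GRing.Theory Num.Theory.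
Set Implicit Arguments. Unset Strict Implicit.
Open Scope ring_scope.

Section Inv.
Variable E : finType.
Variable f : {set E} -> nat.

Lemma symdiff0 (Y Z : {set E}) : (symdiff Y Z \subset ~: setT) = (Y == Z).
Proof.
rewrite setCT subset0; apply/eqP/eqP => [h|->].
- apply/setP => x; move/setP: h => /(_ x); rewrite /symdiff !inE /=.
  by case: (x \in Y); case: (x \in Z).
- by apply/setP => x; rewrite /symdiff !inE; case: (x \in Z).
Qed.

Lemma inversion (Z : {set E}) :
  \sum_(s : {set E} | s \subset setT) F f s * chi s Z = (2 ^ #|[set: E]| * f Z)%N%:Z.
Proof.
rewrite /F; under eq_bigr do rewrite mulr_suml.
rewrite exchange_big /=.
under eq_bigr do (under eq_bigr do rewrite -mulrA chi_sym; rewrite -mulr_sumr sum_chi symdiff0).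
rewrite (bigD1 Z) //= eqxx big1 ?addr0 => [|Y /negbTE ->]; last by rewrite mulr0.
by rewrite PoszM mulrC.
Qed.

Hypothesis f0 : f set0 <> 0%N.
Hypothesis Hk : forall X : {set E}, exists k, (k <= #|X|)%N /\ msum f = (2 ^ k * msum_avoid f X)%N.

Lemma key (Z : {set E}) : (2 ^ #|[set: E]| * f Z)%N%:Z =
  (msum f)%:Z * \sum_(s : {set E} | F f s == (msum f)%:Z) chi s Z.
Proof.
rewrite -inversion mulr_sumr [RHS]big_mkcond /=; apply: eq_big => [s|s _]; first by rewrite subsetT.
case: (F01 f0 Hk s) => ->; case: eqP => //.
- move=> h; move: (Npos f0) h; lia.
- by rewrite mul0r.
Qed.

Lemma supp_chi (Z s : {set E}) : f Z <> 0%N -> F f s = (msum f)%:Z -> chi s Z = 1.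
Proof.
move=> fZ hs; have := @F_sign E f s 1 (or_introl erefl).
rewrite mul1r => /(_ hs Z); case => //.
Qed.

Lemma supp_const (Z : {set E}) : f Z <> 0%N -> f Z = f set0.
Proof.
move=> fZ.
have h : forall W : {set E}, f W <> 0%N -> (2 ^ #|[set: E]| * f W)%N%:Z =
    (msum f)%:Z * \sum_(s : {set E} | F f s == (msum f)%:Z) 1.
  move=> W fW; rewrite key; congr (_ * _); apply: eq_bigr => s /eqP hs.
  exact: supp_chi.
have := h Z fZ; rewrite -(h set0 f0) => /eqP; rewrite eqz_nat => /eqP.
move/eqP; rewrite eqn_pmul2l ?expn_gt0 // => /eqP //.
Qed.

Lemma supp_sym (A B : {set E}) : f A <> 0%N -> f B <> 0%N -> f (symdiff A B) = f set0.
Proof.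
move=> fA fB.
have : (2 ^ #|[set: E]| * f (symdiff A B))%N%:Z = (2 ^ #|[set: E]| * f set0)%N%:Z.
  rewrite !key; congr (_ * _); apply: eq_bigr => s /eqP hs.
  by rewrite -chi_sym !(supp_chi _ hs) // mulr1.
move/eqP; rewrite eqz_nat eqn_pmul2l ?expn_gt0 // => /eqP //.
Qed.
End Inv.

Close Scope ring_scope.

Lemma count_eq (E : finType) (f : {set E} -> nat) (X : {set E}) :
  f set0 <> 0%N -> (forall Z, f Z <> 0%N -> f Z = f set0) ->
  msum_avoid f (~: X) = (#|[set Y in [set Y : {set E} | f Y != 0%N] | Y \subset X]| * f set0)%N.
Proof.
move=> f0 hc.
rewrite -sum_nat_const /msum_avoid setCK big_mkcond [RHS]big_mkcond /=.
apply: eq_bigr => Y _; rewrite !inE.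
case: (Y \subset X); rewrite ?andbT ?andbF //.
case: eqP => [->|h] //=; exact: hc.
Qed.

Theorem theorem7 (E : finType) (f : {set E} -> nat)
  (f0 : f set0 <> 0%N)
  (Hpow : powerful_multiset f)
  (Hrk : forall X : {set E}, Rle (rank f X) (INR #|X|)) :
  exists (E' : finType) (L : {set {set E'}}),
    powerful_set L /\ linear_set L /\ ms_isomorphic f (set_indicator L).
Proof.
have Hk : forall X : {set E}, exists k, (k <= #|X|)%N /\ msum f = (2 ^ k * msum_avoid f X)%N.
  move=> X; have [z hz] := Hpow X.
  have [k [hk hzk]] := @step0 E f X z f0 hz.
  exists k; split => //.
  have := Hrk X; rewrite hz hzk => /INR_le /leP //.
have hc := supp_const f0 Hk.
set c := f set0.
have cpos : (0 < c)%N by rewrite lt0n; apply/eqP.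
exists E, [set Y : {set E} | f Y != 0%N].
split; [|split].
- move=> X.
  have h1 := @count_eq E f X f0 hc.
  have h0 := @count_eq E f set0 f0 hc.
  have e0 : [set Y in [set Y : {set E} | f Y != 0%N] | Y \subset set0] = [set set0].
    apply/setP => Y; rewrite !inE subset0; case: (eqVneq Y set0) => [->|h]; rewrite ?andbF ?andbT //; by apply/eqP.
  rewrite e0 cards1 mul1n setC0 in h0.
  have [k1 [_ e1]] := Hk (~: X).
  have [k2 [_ e2]] := Hk setT.
  rewrite h1 in e1; rewrite h0 in e2.
  set m := #|_| in e1 *.
  have : m %| 2 ^ k2.
    apply/dvdnP; exists (2 ^ k1).
    apply/eqP; rewrite -(eqn_pmul2r cpos) -e2 e1 mulnA; apply/eqP; lia.
  case/dvdn_pfactor => // j _ ->; by exists j.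
- split; first by rewrite inE; apply/eqP.
  move=> A B; rewrite !inE => /eqP hA /eqP hB.
  rewrite (supp_sym f0 Hk hA hB); by apply/eqP.
- exists (fun x => x), (INR c); split; [by exists id | split].
  + by apply: not_0_INR; apply/eqP; rewrite -lt0n.
  + move=> X; rewrite imset_id /set_indicator inE.
    case: eqP => [->|h]; first by rewrite /= Rmult_0_r.
    by rewrite (hc X h) /= Rmult_1_r.
Qed.
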